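(* Let $n\ge2$, $K\in\{1,\ldots,n-1\}$, $\gamma>0$, $\mathcal{C}=\{x\in\mathbb{R}^n\mid \mathbf{1}^\top x=1,\ x\ge0\}$, and let $f$ be real-valued and continuously differentiable on an open set $\mathcal{O}\supset\mathcal{C}$. Let $x^*$ be a d-stationary point of $$\min_{x\in\mathbb{R}^n}\ f(x)+\gamma T_{K,n,1}(x)+\delta_{\mathcal C}(x).$$ If $\gamma>\sqrt2 M'$, where $M'$ is a Lipschitz constant of $f$ on $\mathcal C$ with respect to the $\ell_2$ norm, then $T_{K,n,1}(x^* )=0$. If in addition $0\in\mathcal O$ and $f$ is $M$-smooth on $\mathcal O$, then $T_{K,n,1}(x^* )=0$ holds whenever $\gamma>\min\{\sqrt2M',\ \sqrt2(\|\nabla f(0)\|_2+M)\}$.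
   Context: $T_{K,n,1}(x)$ is the sum of the $n-K$ smallest values among $|x_1|,\ldots,|x_n|$; $\mathbf 1$ is the all-ones vector; $\delta_{\mathcal C}$ is the indicator of $\mathcal C$. $f$ is $M$-smooth on $\mathcal O$ if $\|\nabla f(x)-\nabla f(y)\|_2\le M\|x-y\|_2$ for $x,y\in\mathcal O$. $x^*\in\mathcal C$ is d-stationary if the directional derivative of the objective at $x^*$ is $\ge0$ for every $d$ in the feasible cone $\mathcal{F}(x^*;\mathcal{C})=\{d\mid \exists\varsigma'>0:\ x^*+\varsigma d\in\mathcal{C}\ \forall\varsigma\in(0,\varsigma')\}$. *)

(* Defs.v *)
From HB Require Import structures.
From mathcomp Require Import all_boot all_order all_algebra.
From mathcomp Require Import all_classical all_reals all_analysis.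
Set Implicit Arguments. Unset Strict Implicit. Unset Printing Implicit Defensive.
Import Order.TTheory GRing.Theory Num.Theory.
Import numFieldNormedType.Exports.
Local Open Scope classical_set_scope.
Local Open Scope ring_scope.

Section Defs.
Variables (R : realType) (n : nat).

Definition norm2 (v : 'rV[R]_n) : R := Num.sqrt (\sum_(i < n) v ord0 i ^+ 2).

Definition ones : 'rV[R]_n := const_mx 1.
Definition sum_coords (x : 'rV[R]_n) : R := \sum_(i < n) x ord0 i.

Definition simplex : set 'rV[R]_n :=
  [set x | sum_coords x = 1 /\ forall i, 0 <= x ord0 i].

Definition T_K1 (K : nat) (x : 'rV[R]_n) : R :=
  \sum_(i < n - K) nth 0 (sort <=%O [seq `|x ord0 j| | j <- enum 'I_n]) i.

Definition grad (f : 'rV[R]_n -> R) (x : 'rV[R]_n) : 'rV[R]_n :=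
  \row_(i < n) ('d f x (delta_mx ord0 i : 'rV[R]_n) : R).

Definition C1_on (f : 'rV[R]_n -> R) (O : set 'rV[R]_n) : Prop :=
  (forall x, O x -> differentiable f x) /\
  (forall x, O x -> {for x, continuous (grad f)}).

Definition lipschitz2_on (L : R) (f : 'rV[R]_n -> R) (A : set 'rV[R]_n) : Prop :=
  forall x y, A x -> A y -> `|f x - f y| <= L * norm2 (x - y).

Definition smooth_on (M : R) (f : 'rV[R]_n -> R) (O : set 'rV[R]_n) : Prop :=
  forall x y, O x -> O y -> norm2 (grad f x - grad f y) <= M * norm2 (x - y).

Definition feas_cone (A : set 'rV[R]_n) (x : 'rV[R]_n) : set 'rV[R]_n :=
  [set d | exists2 s' : R, 0 < s' &
           forall s : R, 0 < s -> s < s' -> A (x + s *: d)].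

(* Along a feasible
   direction, delta_C vanishes at xs + t d for all small t>0, so the
   difference quotient of the full objective coincides (for small t) with
   that of f + gamma T_{K,n,1}. *)
Definition d_stationary (f : 'rV[R]_n -> R) (gamma : R) (K : nat)
    (C : set 'rV[R]_n) (xs : 'rV[R]_n) : Prop :=
  C xs /\
  forall d, feas_cone C xs d ->
    exists2 L : R,
      (fun t : R => ((f (xs + t *: d) + gamma * T_K1 K (xs + t *: d))
                     - (f xs + gamma * T_K1 K xs)) / t) @ 0^'+ --> L
      & 0 <= L.

End Defs.

(* Main.v *)
From HB Require Import structures.
From mathcomp Require Import all_boot all_order all_algebra.
From mathcomp Require Import all_classical all_reals all_analysis.
Require Import Defs.
From mathcomp Require Import ring lra.
Import Order.TTheory GRing.Theory Num.Theory.
Import numFieldNormedType.Exports.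
Local Open Scope ring_scope.
Lemma sorted_sum_le (R : realType) (a : seq R) (m : nat) (P : seq nat) :
  sorted <=%O a -> uniq P -> all (fun p => p < size a)%N P -> size P = m ->
  \sum_(k < m) nth 0 a k <= \sum_(p <- P) nth 0 a p.
Proof.
move=> sa; elim: m P => [|m IH] P uP aP sP.
  by rewrite (size0nil sP) big_ord0 big_nil.
have [p pP mp] : exists2 p, p \in P & (m <= p)%N.
  apply/hasP; apply/negPn/negP => /hasPn H.
  have : (size P <= size (iota 0 m))%N.
    apply: uniq_leq_size => // x xP; rewrite mem_iota /= add0n.
    by have := H x xP; rewrite -ltnNge.
  by rewrite size_iota sP ltnn.
rewrite big_ord_recr /= (perm_big _ (perm_to_rem pP)) big_cons addrC lerD //.
  have pa : (p < size a)%N by apply: (allP aP).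
  apply: (le_sorted_leq_nth 0 sa) => //; rewrite inE //.
  exact: leq_ltn_trans pa.
apply: IH; first by rewrite rem_uniq.
  by apply/allP => x /mem_rem xP; apply: (allP aP).
by rewrite size_rem // sP.
Qed.
Lemma sort_sum_le {R : realType} {n} (G : 'I_n -> R) (m : nat) (J : seq 'I_n) :
  uniq J -> size J = m ->
  \sum_(k < m) nth 0 (sort <=%O [seq G j | j <- enum 'I_n]) k <= \sum_(l <- J) G l.
Proof.
move=> uJ sJ.
have sa := sort_sorted (@le_total _ R) [seq G j | j <- enum 'I_n].
have saz : size (sort <=%O [seq G j | j <- enum 'I_n]) = n.
  by rewrite size_sort size_map size_enum_ord.
move: sa saz; rewrite sort_map.
set Is := sort _ _ => sa saz.
have pI : perm_eq Is (enum 'I_n) by rewrite perm_sort.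
have inI : forall l, l \in Is by move=> l; rewrite (perm_mem pI) mem_enum.
have -> : \sum_(l <- J) G l = \sum_(p <- map (index^~ Is) J) nth 0 [seq G i | i <- Is] p.
  rewrite big_map; apply: eq_big_seq => l _.
  rewrite (nth_map l) ?index_mem ?inI // nth_index //.
apply: sorted_sum_le => //.
- rewrite map_inj_in_uniq // => x y _ _; exact: index_inj (inI x) (inI y).
- apply/allP => p /mapP [l _ ->]; rewrite size_map index_mem //.
- by rewrite size_map.
Qed.
Lemma sort_sum_eq {R : realType} {n} (G : 'I_n -> R) (m : nat) : (m < n)%N ->
  exists J : seq 'I_n, exists j : 'I_n, [/\ uniq J, size J = m, j \notin J &
  \sum_(k < m) nth 0 (sort <=%O [seq G j | j <- enum 'I_n]) k = \sum_(l <- J) G l].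
Proof.
move=> mn; set x0 : 'I_n := Ordinal mn.
rewrite sort_map; set Is := sort _ _.
have pI : perm_eq Is (enum 'I_n) by rewrite perm_sort.
have uI : uniq Is by rewrite (perm_uniq pI) enum_uniq.
have sI : size Is = n by rewrite (perm_size pI) size_enum_ord.
have : uniq (take m Is ++ drop m Is) by rewrite cat_take_drop.
rewrite cat_uniq => /and3P [u1 h2 _].
exists (take m Is), (nth x0 (drop m Is) 0); split => //.
- by rewrite size_takel // sI ltnW.
- apply/negP => H; move/hasPn: h2 => h2.
  have := h2 (nth x0 (drop m Is) 0).
  have hm : nth x0 (drop m Is) 0 \in drop m Is.
    by apply: mem_nth; rewrite size_drop sI subn_gt0.
  by move=> /(_ hm); rewrite H.
rewrite (big_nth x0) size_takel ?sI ?(ltnW mn) // big_mkord.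
apply: eq_bigr => k _.
by rewrite (nth_map x0) ?sI ?(ltn_trans (ltn_ord k)) // nth_take.
Qed.
Local Open Scope classical_set_scope.
Definition dir (R : realType) {n} (i j : 'I_n) : 'rV[R]_n :=
  delta_mx ord0 j - delta_mx ord0 i.

Lemma dirE {R : realType} {n} (i j l : 'I_n) :
  @dir R n i j ord0 l = (l == j)%:R - (l == i)%:R.
Proof. by rewrite !mxE. Qed.

Lemma T_descent {R : realType} {n} K (x : 'rV[R]_n) :
  @simplex R n x -> (1 <= K)%N -> (2 <= n)%N -> T_K1 K x != 0 ->
  exists i j : 'I_n, [/\ i != j, 0 < x ord0 i &
   forall t, 0 < t -> t <= x ord0 i -> T_K1 K (x + t *: @dir R n i j) <= T_K1 K x - t].
Proof.
move=> [s1 x0] K1 n2 T0.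
have mn : (n - K < n)%N by rewrite ltn_subrL K1 (leq_trans _ n2).
have [J [j [uJ sJ jJ eT]]] := @sort_sum_eq _ _ (fun l => `|x ord0 l|) _ mn.
have Te : T_K1 K x = \sum_(l <- J) `|x ord0 l| by rewrite /T_K1 eT.
case: (boolP (has (fun l => x ord0 l != 0) J)) => [/hasP[i iJ xi]|/hasPn H]; last first.
  move: T0; rewrite Te big1_seq ?eqxx // => l /andP [_ lJ].
  by have := H l lJ; rewrite negbK => /eqP ->; rewrite normr0.
have xip : 0 < x ord0 i by rewrite lt0r xi x0.
have ij : i != j by apply: contraNneq jJ => <-.
exists i, j; split => // t t0 ti.
have yE : forall l, (x + t *: @dir R n i j) ord0 l = x ord0 l + t * ((l == j)%:R - (l == i)%:R).
  by move=> l; rewrite !mxE.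
apply: (le_trans (@sort_sum_le _ _ (fun l => `|(x + t *: @dir R n i j) ord0 l|) _ J uJ sJ)).
rewrite Te (bigD1_seq i) //= (bigD1_seq i iJ uJ) /= yE eqxx (negbTE ij) /=.
rewrite sub0r mulrN1 (ger0_norm (x0 i)) ger0_norm ?subr_ge0 //.
rewrite [in leRHS]addrAC lerD2l le_eqVlt; apply/orP; left; apply/eqP.
rewrite big_seq_cond [in RHS]big_seq_cond; apply: eq_bigr => l /andP [lJ li].
rewrite yE (negbTE li).
have -> : (l == j) = false by apply/negP => /eqP lj; move: jJ; rewrite -lj lJ.
by rewrite subrr mulr0 addr0.
Qed.

Lemma sum_sq2 {R : realType} {n} (v : 'rV[R]_n) {i j : 'I_n} : i != j ->
  v ord0 i ^+ 2 + v ord0 j ^+ 2 <= \sum_(k < n) v ord0 k ^+ 2.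
Proof.
move=> ij; rewrite (bigD1 i) //= (bigD1 j) 1?eq_sym //= addrA lerDl.
by apply: sumr_ge0 => k _; rewrite sqr_ge0.
Qed.

Lemma diff_le_norm2 {R : realType} {n} (v : 'rV[R]_n) {i j : 'I_n} : i != j ->
  v ord0 j - v ord0 i <= Num.sqrt 2 * norm2 v.
Proof.
move=> ij; apply: (le_trans (ler_norm _)).
rewrite -sqrtr_sqr /norm2 -sqrtrM // ler_sqrt; last first.
  by rewrite mulr_ge0 // sumr_ge0 // => k _; rewrite sqr_ge0.
have h := sum_sq2 v ij; have h2 := sqr_ge0 (v ord0 i + v ord0 j).
move: h h2; set S := \sum_(_ < _) _; set a := v ord0 i; set b := v ord0 j.
move=> h h2; nra.
Qed.

Lemma norm2_dir {R : realType} {n} (i j : 'I_n) (t : R) : i != j -> 0 <= t ->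
  norm2 (t *: @dir R n i j) = t * Num.sqrt 2.
Proof.
move=> ij t0; rewrite /norm2 (bigD1 i) //= (bigD1 j) 1?eq_sym //= big1; last first.
  by move=> k /andP [ki kj]; rewrite !mxE (negbTE ki) (negbTE kj) subrr mulr0 expr0n.
rewrite !mxE !eqxx (negbTE ij) eq_sym (negbTE ij) /= addr0.
have -> : (t * (0 - 1)) ^+ 2 + (t * (1 - 0)) ^+ 2 = t ^+ 2 * 2 by rewrite sub0r subr0; ring.
by rewrite sqrtrM ?sqr_ge0 // sqrtr_sqr ger0_norm.
Qed.

Lemma simplex_norm2 {R : realType} {n} (x : 'rV[R]_n) (i : 'I_n) :
  @simplex R n x -> 0 < x ord0 i -> 0 < norm2 x <= 1.
Proof.
move=> [s1 x0] xi; apply/andP; split.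
  rewrite /norm2 sqrtr_gt0 (bigD1 i) //=; apply: (lt_le_trans (exprn_gt0 2 xi)).
  by rewrite lerDl sumr_ge0 // => k _; rewrite sqr_ge0.
rewrite /norm2 -sqrtr1 ler_sqrt // -s1 /sum_coords; apply: ler_sum => k _.
have xk1 : x ord0 k <= 1.
  by rewrite -s1 /sum_coords (bigD1 k) //= lerDl sumr_ge0.
by rewrite expr2 ler_piMr.
Qed.

Lemma feas {R : realType} {n} (x : 'rV[R]_n) (i j : 'I_n) (s : R) :
  @simplex R n x -> i != j -> 0 <= s -> s <= x ord0 i -> @simplex R n (x + s *: @dir R n i j).
Proof.
move=> [s1 x0] ij s0 si; split.
  rewrite /sum_coords.
  under eq_bigr => k _ do rewrite !mxE eqxx /=.
  have e1 : forall a : 'I_n, \sum_(k < n) (k == a)%:R = 1 :> R.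
    by move=> a; rewrite (bigD1 a) //= eqxx big1 ?addr0 // => k /negbTE ->.
  by rewrite big_split /= -mulr_sumr sumrB !e1 subrr mulr0 addr0.
move=> k; rewrite !mxE eqxx /=; case: (eqVneq k i) => [->|ki].
  by rewrite (negbTE ij) sub0r mulrN1 subr_ge0.
by rewrite subr0 addr_ge0 // mulr_ge0 // ler0n.
Qed.

Lemma stat_core {R : realType} {n} K (f : 'rV[R]_n -> R) gamma xs :
  (1 <= K)%N -> (2 <= n)%N -> 0 <= gamma ->
  d_stationary f gamma K (@simplex R n) xs -> T_K1 K xs != 0 ->
  exists i j : 'I_n, exists L : R, [/\ i != j, 0 < xs ord0 i, 0 <= L,
    (fun t : R => ((f (xs + t *: @dir R n i j) + gamma * T_K1 K (xs + t *: @dir R n i j))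
                     - (f xs + gamma * T_K1 K xs)) / t) @ 0^'+ --> L &
    \forall t \near 0^'+, ((f (xs + t *: @dir R n i j) + gamma * T_K1 K (xs + t *: @dir R n i j))
                     - (f xs + gamma * T_K1 K xs)) / t
       <= (f (xs + t *: @dir R n i j) - f xs) / t - gamma].
Proof.
move=> K1 n2 g0 [Cx st] T0.
have [i [j [ij xi Td]]] := @T_descent _ _ K xs Cx K1 n2 T0.
have fc : feas_cone (@simplex R n) xs (@dir R n i j).
  exists (xs ord0 i) => // s s0 ss; exact: feas Cx ij (ltW s0) (ltW ss).
have [L qL L0] := st _ fc.
exists i, j, L; split => //.
near=> t.
have t0 : 0 < t by near: t; exact: nbhs_right_gt.
have ti : t < xs ord0 i by near: t; exact: nbhs_right_lt.
have hT := ler_wpM2l g0 (Td t t0 (ltW ti)).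
rewrite ler_pdivrMr // mulrBl divfK ?gt_eqF //.
move: hT; rewrite mulrBr; lra.
Unshelve. all: by end_near.
Qed.

Lemma fin_arith {R : realType} {a b c e L g s1 s2 s3 : R} :
  0 <= L -> c - e <= s1 -> a - c - (b - e) <= s3 -> s3 <= s2 ->
  L <= a - b - g -> s1 + s2 < g -> False.
Proof. move=> *; lra. Qed.

Theorem mainTheorem13 (R : realType) (n K : nat) (gamma : R)
    (f : 'rV[R]_n -> R) (O : set 'rV[R]_n) (xs : 'rV[R]_n) :
  (2 <= n)%N -> (1 <= K)%N -> (K <= n - 1)%N -> 0 < gamma ->
  open O -> @simplex R n `<=` O -> C1_on f O ->
  d_stationary f gamma K (@simplex R n) xs ->
  (forall M' : R, lipschitz2_on M' f (@simplex R n) ->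
     gamma > Num.sqrt 2 * M' -> T_K1 K xs = 0) /\
  (O 0 -> forall M M' : R, smooth_on M f O -> lipschitz2_on M' f (@simplex R n) ->
     gamma > Num.min (Num.sqrt 2 * M') (Num.sqrt 2 * (norm2 (grad f 0) + M)) ->
     T_K1 K xs = 0).
Proof.
move=> n2 K1 Kn g0 oO sO [dif gc] st.
have Cx : @simplex R n xs by case: st.
have part1 : forall M' : R, lipschitz2_on M' f (@simplex R n) ->
     gamma > Num.sqrt 2 * M' -> T_K1 K xs = 0.
  move=> M' lip gM; apply/eqP; apply: contraT => T0.
  have [i [j [L [ij xi L0 qL hq]]]] := @stat_core _ _ K f gamma xs K1 n2 (ltW g0) st T0.
  have : L <= Num.sqrt 2 * M' - gamma.
    rewrite -(cvg_lim _ qL) //; apply: limr_le; first exact: (cvgP L qL).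
    near=> t.
    have t0 : 0 < t by near: t; exact: nbhs_right_gt.
    have ti : t < xs ord0 i by near: t; exact: nbhs_right_lt.
    have h : ((f (xs + t *: @dir R n i j) + gamma * T_K1 K (xs + t *: @dir R n i j))
                     - (f xs + gamma * T_K1 K xs)) / t
       <= (f (xs + t *: @dir R n i j) - f xs) / t - gamma by near: t; exact: hq.
    apply: (le_trans h); rewrite lerD2r.
    have Cy := @feas _ _ xs i j t Cx ij (ltW t0) (ltW ti).
    have := lip _ _ Cy Cx; rewrite [xs + _]addrC addrK norm2_dir ?(ltW t0) // => hl.
    rewrite ler_pdivrMr //; apply: le_trans (ler_norm _) _; apply: (le_trans hl).
    by rewrite le_eqVlt; apply/orP; left; apply/eqP; ring.
  by move=> h; exfalso; lra.
split => //.
move=> O0 M M' sm lip; rewrite gt_min => /orP [h|h]; first exact: part1 lip h.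
apply/eqP; apply: contraT => T0.
have [i [j [L [ij xi L0 qL hq]]]] := @stat_core _ _ K f gamma xs K1 n2 (ltW g0) st T0.
have dx := dif xs (sO _ Cx).
set d := @dir R n i j.
have h1 : (fun h : R => h^-1 *: ((f \o shift xs) (h *: d) - f xs)) @ 0^' --> 'D_d f xs :=
  diff_derivable dx.
rewrite deriveE // in h1.
have hD : (fun t : R => (f (xs + t *: d) - f xs) / t) @ 0^'+ --> 'd f xs d.
  have -> : (fun t : R => (f (xs + t *: d) - f xs) / t) =
            (fun h : R => h^-1 *: ((f \o shift xs) (h *: d) - f xs)).
    by apply/funext => t /=; rewrite [t *: d + _]addrC mulrC.
  apply: cvg_trans h1; apply: cvg_app; apply: within_subset => u /= u0.
  by rewrite gt_eqF.
have hD' : (fun t : R => (f (xs + t *: d) - f xs) / t - gamma) @ 0^'+ --> 'd f xs d - gamma.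
  by apply: cvgB => //; exact: cvg_cst.
have hL : L <= 'd f xs d - gamma.
  rewrite -(cvg_lim _ qL) // -(cvg_lim _ hD') //.
  by apply: ler_lim => //; [exact: (cvgP L qL)|exact: (cvgP _ hD')].
have Dg : 'd f xs d = grad f xs ord0 j - grad f xs ord0 i.
  by rewrite /d /dir linearB /= /grad !mxE.
have e2 : forall k, (grad f xs - grad f 0) ord0 k = grad f xs ord0 k - grad f 0 ord0 k.
  by move=> k; rewrite [LHS]mxE [X in _ + X]mxE.
have b1 := diff_le_norm2 (grad f 0) ij; have b2 := diff_le_norm2 (grad f xs - grad f 0) ij.
rewrite !e2 in b2.
have hs := sm _ _ (sO _ Cx) O0; rewrite subr0 in hs.
have /andP [nx0 nx1] := @simplex_norm2 _ _ xs i Cx xi.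
have M0 : 0 <= M.
  by rewrite -(pmulr_lge0 _ nx0); apply: le_trans hs; exact: sqrtr_ge0.
have hM : norm2 (grad f xs - grad f 0) <= M by apply: (le_trans hs); rewrite ler_piMr.
have s2 : 0 <= Num.sqrt (2:R) := sqrtr_ge0 _.
have := ler_wpM2l s2 hM.
move=> hh; rewrite Dg in hL; rewrite mulrDr in h.
by exfalso; exact: (fin_arith L0 b1 b2 hh hL h).
Unshelve. all: by end_near.
Qed.
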